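(* A sequent $\Gamma\Rightarrow\Delta$ is derivable in $\mathsf{S.ConstCK}$ if and only if $\iota(\Gamma\Rightarrow\Delta)$ is derivable in $\mathsf{ConstCK}$.
   Context: Language $\mathcal{L}$: formulas $\varphi ::= p \mid \bot \mid \varphi\wedge\varphi \mid \varphi\vee\varphi \mid \varphi\to\varphi \mid \varphi \mathrel{\Box\!\!\to} \varphi \mid \varphi \mathrel{\Diamond\!\!\to}\varphi$; $\neg\varphi:=\varphi\to\bot$, $\top:=\neg\bot$, $\varphi\leftrightarrow\psi:=(\varphi\to\psi)\wedge(\psi\to\varphi)$. Hilbert system $\mathsf{ConstCK}$: any axiomatisation of intuitionistic propositional logic in $\mathcal{L}$ with modus ponens, plus axioms CM$_\Box$: $(\varphi\mathrel{\Box\!\!\to}\psi\wedge\chi)\to(\varphi\mathrel{\Box\!\!\to}\psi)\wedge(\varphi\mathrel{\Box\!\!\to}\chi)$; CC$_\Box$: $(\varphi\mathrel{\Box\!\!\to}\psi)\wedge(\varphi\mathrel{\Box\!\!\to}\chi)\to(\varphi\mathrel{\Box\!\!\to}\psi\wedge\chi)$; CN$_\Box$: $\varphi\mathrel{\Box\!\!\to}\top$; CN$_\Diamond$: $\neg(\varphi\mathrel{\Diamond\!\!\to}\bot)$; CK$_\Diamond$: $(\varphi\mathrel{\Box\!\!\to}(\psi\to\chi))\to((\varphi\mathrel{\Diamond\!\!\to}\psi)\to(\varphi\mathrel{\Diamond\!\!\to}\chi))$; and rules RA$_\Box$: from $\varphi\leftrightarrow\rho$ infer $(\varphi\mathrel{\Box\!\!\to}\psi)\leftrightarrow(\rho\mathrel{\Box\!\!\to}\psi)$;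 RC$_\Box$: from $\psi\leftrightarrow\chi$ infer $(\varphi\mathrel{\Box\!\!\to}\psi)\leftrightarrow(\varphi\mathrel{\Box\!\!\to}\chi)$; RA$_\Diamond$, RC$_\Diamond$: the same with $\mathrel{\Diamond\!\!\to}$. A sequent $\Gamma\Rightarrow\Delta$ is a pair of finite multisets of formulas with $|\Delta|\le1$; $\varphi\Leftrightarrow\rho$ abbreviates the two sequents $\varphi\Rightarrow\rho$, $\rho\Rightarrow\varphi$. Formula interpretation: $\iota(\Gamma\Rightarrow\Delta)=\bigwedge\Gamma\to\bigvee\Delta$ if $\Gamma\neq\emptyset$ and $\bigvee\Delta$ if $\Gamma=\emptyset$, with $\bigvee\emptyset=\bot$. Rules of $\mathsf{S.ConstCK}$ (premisses / conclusion, $0\le|\Delta|\le1$, $n\ge0$): init: $\Gamma,p\Rightarrow p$; $\bot_L$: $\Gamma,\bot\Rightarrow\Delta$; $\wedge_L$: $\Gamma,\varphi,\psi\Rightarrow\Delta$ / $\Gamma,\varphi\wedge\psi\Rightarrow\Delta$; $\wedge_R$: $\Gamma\Rightarrow\varphi$, $\Gamma\Rightarrow\psi$ / $\Gamma\Rightarrow\varphi\wedge\psi$; $\vee_L$: $\Gamma,\varphi\Rightarrow\Delta$, $\Gamma,\psi\Rightarrow\Delta$ / $\Gamma,\varphi\vee\psi\Rightarrow\Delta$; $\vee_R^1$: $\Gamma\Rightarrow\varphi$ / $\Gamma\Rightarrow\varphi\vee\psi$; $\vee_R^2$: $\Gamma\Rightarrow\psi$ / $\Gamma\Rightarrow\varphi\vee\psi$;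 $\to_R$: $\Gamma,\varphi\Rightarrow\psi$ / $\Gamma\Rightarrow\varphi\to\psi$; $\to_L$: $\Gamma,\varphi\to\psi\Rightarrow\varphi$, $\Gamma,\psi\Rightarrow\Delta$ / $\Gamma,\varphi\to\psi\Rightarrow\Delta$; $\Box$: $\{\varphi\Leftrightarrow\rho_i\}_{i\le n}$, $\sigma_1,\dots,\sigma_n\Rightarrow\psi$ / $\Gamma,\rho_1\mathrel{\Box\!\!\to}\sigma_1,\dots,\rho_n\mathrel{\Box\!\!\to}\sigma_n\Rightarrow\varphi\mathrel{\Box\!\!\to}\psi$; $\Diamond$: $\{\varphi\Leftrightarrow\rho_i\}_{i\le n}$, $\varphi\Leftrightarrow\eta$, $\sigma_1,\dots,\sigma_n,\psi\Rightarrow\vartheta$ / $\Gamma,\rho_1\mathrel{\Box\!\!\to}\sigma_1,\dots,\rho_n\mathrel{\Box\!\!\to}\sigma_n,\varphi\mathrel{\Diamond\!\!\to}\psi\Rightarrow\eta\mathrel{\Diamond\!\!\to}\vartheta$; $\Box\Diamond$: $\{\varphi\Leftrightarrow\rho_i\}_{i\le n}$, $\sigma_1,\dots,\sigma_n,\psi\Rightarrow$ / $\Gamma,\rho_1\mathrel{\Box\!\!\to}\sigma_1,\dots,\rho_n\mathrel{\Box\!\!\to}\sigma_n,\varphi\mathrel{\Diamond\!\!\to}\psi\Rightarrow\Delta$. *)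

(* Defs.v *)
From Stdlib Require Import List Permutation.
Import ListNotations.

Inductive form : Type :=
| Var : nat -> form
| Bot : form
| And : form -> form -> form
| Or : form -> form -> form
| Imp : form -> form -> form
| BoxArr : form -> form -> form
| DiaArr : form -> form -> form.

Definition Neg (a : form) : form := Imp a Bot.
Definition Top : form := Neg Bot.
Definition Iff (a b : form) : form := And (Imp a b) (Imp b a).

Inductive HDer : form -> Prop :=
| H_K  : forall a b, HDer (Imp a (Imp b a))
| H_S  : forall a b c, HDer (Imp (Imp a (Imp b c)) (Imp (Imp a b) (Imp a c)))
| H_AE1 : forall a b, HDer (Imp (And a b) a)
| H_AE2 : forall a b, HDer (Imp (And a b) b)
| H_AI : forall a b, HDer (Imp a (Imp b (And a b)))
| H_OI1 : forall a b, HDer (Imp a (Or a b))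
| H_OI2 : forall a b, HDer (Imp b (Or a b))
| H_OE : forall a b c, HDer (Imp (Imp a c) (Imp (Imp b c) (Imp (Or a b) c)))
| H_EFQ : forall a, HDer (Imp Bot a)
| H_MP : forall a b, HDer (Imp a b) -> HDer a -> HDer b
| H_CMbox : forall a b c,
    HDer (Imp (BoxArr a (And b c)) (And (BoxArr a b) (BoxArr a c)))
| H_CCbox : forall a b c,
    HDer (Imp (And (BoxArr a b) (BoxArr a c)) (BoxArr a (And b c)))
| H_CNbox : forall a, HDer (BoxArr a Top)
| H_CNdia : forall a, HDer (Neg (DiaArr a Bot))
| H_CKdia : forall a b c,
    HDer (Imp (BoxArr a (Imp b c)) (Imp (DiaArr a b) (DiaArr a c)))
| H_RAbox : forall a r b, HDer (Iff a r) -> HDer (Iff (BoxArr a b) (BoxArr r b))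
| H_RCbox : forall a b c, HDer (Iff b c) -> HDer (Iff (BoxArr a b) (BoxArr a c))
| H_RAdia : forall a r b, HDer (Iff a r) -> HDer (Iff (DiaArr a b) (DiaArr r b))
| H_RCdia : forall a b c, HDer (Iff b c) -> HDer (Iff (DiaArr a b) (DiaArr a c)).

(** Sequents: antecedent a list read as a multiset (every rule's conclusion
    may be any permutation of its displayed antecedent), succedent an
    [option form] (so |Delta| <= 1). *)
Definition boxes (rs : list (form * form)) : list form :=
  map (fun rs => BoxArr (fst rs) (snd rs)) rs.

Inductive SDer : list form -> option form -> Prop :=
| S_init : forall G p G',
    Permutation G' (G ++ [Var p]) -> SDer G' (Some (Var p))
| S_botL : forall G D G',
    Permutation G' (G ++ [Bot]) -> SDer G' D
| S_andL : forall G a b D G',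
    SDer (G ++ [a; b]) D ->
    Permutation G' (G ++ [And a b]) -> SDer G' D
| S_andR : forall G a b,
    SDer G (Some a) -> SDer G (Some b) -> SDer G (Some (And a b))
| S_orL : forall G a b D G',
    SDer (G ++ [a]) D -> SDer (G ++ [b]) D ->
    Permutation G' (G ++ [Or a b]) -> SDer G' D
| S_orR1 : forall G a b, SDer G (Some a) -> SDer G (Some (Or a b))
| S_orR2 : forall G a b, SDer G (Some b) -> SDer G (Some (Or a b))
| S_impR : forall G a b, SDer (G ++ [a]) (Some b) -> SDer G (Some (Imp a b))
| S_impL : forall G a b D G',
    SDer (G ++ [Imp a b]) (Some a) -> SDer (G ++ [b]) D ->
    Permutation G' (G ++ [Imp a b]) -> SDer G' D
| S_box : forall G (rs : list (form * form)) a b G',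
    (forall r s, In (r, s) rs -> SDer [a] (Some r) /\ SDer [r] (Some a)) ->
    SDer (map snd rs) (Some b) ->
    Permutation G' (G ++ boxes rs) ->
    SDer G' (Some (BoxArr a b))
| S_dia : forall G (rs : list (form * form)) a b e t G',
    (forall r s, In (r, s) rs -> SDer [a] (Some r) /\ SDer [r] (Some a)) ->
    SDer [a] (Some e) -> SDer [e] (Some a) ->
    SDer (map snd rs ++ [b]) (Some t) ->
    Permutation G' (G ++ boxes rs ++ [DiaArr a b]) ->
    SDer G' (Some (DiaArr e t))
| S_boxdia : forall G (rs : list (form * form)) a b D G',
    (forall r s, In (r, s) rs -> SDer [a] (Some r) /\ SDer [r] (Some a)) ->
    SDer (map snd rs ++ [b]) None ->
    Permutation G' (G ++ boxes rs ++ [DiaArr a b]) ->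
    SDer G' D.

Definition bigwedge (g : form) (gs : list form) : form := fold_left And gs g.
Definition bigvee (D : option form) : form :=
  match D with None => Bot | Some d => d end.
Definition iota (G : list form) (D : option form) : form :=
  match G with
  | [] => bigvee D
  | g :: gs => Imp (bigwedge g gs) (bigvee D)
  end.

(* Main.v *)
Require Import Defs.
From Stdlib Require Import List Permutation Arith Lia.
Import ListNotations.

Lemma fdec : forall x y : form, {x = y} + {x <> y}.
Proof. decide equality; apply PeanoNat.Nat.eq_dec. Defined.
Lemma pdec : forall x y : form * form, {x = y} + {x <> y}.
Proof. decide equality; apply fdec. Defined.

Inductive D : nat -> list form -> option form -> Prop :=
| Dinit : forall n G p, In (Var p) G -> D n G (Some (Var p))
| Dbot : forall n G d, In Bot G -> D n G d
| DandL : forall n G a b d, In (And a b) G -> D n (a :: b :: G) d -> D (S n) G d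
| DandR : forall n G a b, D n G (Some a) -> D n G (Some b) -> D (S n) G (Some (And a b))
| DorL : forall n G a b d, In (Or a b) G -> D n (a :: G) d -> D n (b :: G) d -> D (S n) G d
| DorR1 : forall n G a b, D n G (Some a) -> D (S n) G (Some (Or a b))
| DorR2 : forall n G a b, D n G (Some b) -> D (S n) G (Some (Or a b))
| DimpR : forall n G a b, D n (a :: G) (Some b) -> D (S n) G (Some (Imp a b))
| DimpL : forall n G a b d, In (Imp a b) G -> D n G (Some a) -> D n (b :: G) d -> D (S n) G d
| Dbox : forall n G rs a b, incl (boxes rs) G ->
    (forall r s, In (r, s) rs -> D n [a] (Some r)) ->
    (forall r s, In (r, s) rs -> D n [r] (Some a)) ->
    D n (map snd rs) (Some b) -> D (S n) G (Some (BoxArr a b))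
| Ddia : forall n G rs a b e t, incl (boxes rs) G -> In (DiaArr a b) G ->
    (forall r s, In (r, s) rs -> D n [a] (Some r)) ->
    (forall r s, In (r, s) rs -> D n [r] (Some a)) ->
    D n [a] (Some e) -> D n [e] (Some a) ->
    D n (b :: map snd rs) (Some t) -> D (S n) G (Some (DiaArr e t))
| Dbd : forall n G rs a b d, incl (boxes rs) G -> In (DiaArr a b) G ->
    (forall r s, In (r, s) rs -> D n [a] (Some r)) ->
    (forall r s, In (r, s) rs -> D n [r] (Some a)) ->
    D n (b :: map snd rs) None -> D (S n) G d.

Ltac inc := let x := fresh "x" in let H := fresh "Hx" in
  intros x H; simpl in *; repeat rewrite in_app_iff in *; simpl in *;
  intuition (subst; auto with datatypes).

Lemma wk : forall n G d, D n G d -> forall m G', n <= m -> incl G G' -> D m G' d.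
Proof.
  induction 1; intros m G' Hle Hi;
  try (destruct m as [|m]; [lia|]); try (apply le_S_n in Hle).
  - apply Dinit; auto.
  - apply Dbot; auto.
  - eapply DandL; eauto. apply IHD; auto. inc.
  - apply DandR; auto.
  - eapply DorL; eauto. apply IHD1; auto; inc. apply IHD2; auto; inc.
  - apply DorR1; auto.
  - apply DorR2; auto.
  - apply DimpR; auto. apply IHD; auto; inc.
  - eapply DimpL; eauto. apply IHD2; auto; inc.
  - apply Dbox with (rs := rs); [eapply incl_tran; eauto| | |].
    intros; eapply H1; eauto; apply incl_refl. intros; eapply H3; eauto; apply incl_refl.
    apply IHD; auto; apply incl_refl.
  - apply Ddia with (rs := rs) (a := a) (b := b); [eapply incl_tran; eauto|auto| | | | |].
    intros; eapply H2; eauto; apply incl_refl. intros; eapply H4; eauto; apply incl_refl.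
    apply IHD1; auto; apply incl_refl. apply IHD2; auto; apply incl_refl. apply IHD3; auto; apply incl_refl.
  - apply Dbd with (rs := rs) (a := a) (b := b); [eapply incl_tran; eauto|auto| | |].
    intros; eapply H2; eauto; apply incl_refl. intros; eapply H4; eauto; apply incl_refl.
    apply IHD; auto; apply incl_refl.
Qed.

Definition Dx G d := exists n, D n G d.

Lemma Dx_wk : forall G d, Dx G d -> forall G', incl G G' -> Dx G' d.
Proof. intros G d [n H] G' Hi. exists n. eapply wk; eauto. Qed.

Lemma Dx_list : forall (l : list (form * form)) (f : form * form -> list form)
  (g : form * form -> option form),
  (forall p, In p l -> Dx (f p) (g p)) -> exists n, forall p, In p l -> D n (f p) (g p).
Proof.
  induction l; intros f g H.
  - exists 0. intros p [].
  - destruct (H a (or_introl eq_refl)) as [n1 H1].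
    destruct (IHl f g) as [n2 H2]. { intros; apply H; simpl; auto. }
    exists (max n1 n2). intros p [<-|Hp]; eapply wk; eauto; try lia; apply incl_refl.
Qed.

Lemma lift : forall n G d m, D n G d -> n <= m -> D m G d.
Proof. intros; eapply wk; eauto. apply incl_refl. Qed.

Lemma Dx_andL : forall G a b d, In (And a b) G -> Dx (a :: b :: G) d -> Dx G d.
Proof. intros G a b d H [n Hn]. exists (S n). eapply DandL; eauto. Qed.
Lemma Dx_andR : forall G a b, Dx G (Some a) -> Dx G (Some b) -> Dx G (Some (And a b)).
Proof. intros G a b [n1 H1] [n2 H2]. exists (S (max n1 n2)).
  apply DandR; eapply lift; eauto; lia. Qed.
Lemma Dx_orL : forall G a b d, In (Or a b) G -> Dx (a :: G) d -> Dx (b :: G) d -> Dx G d.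
Proof. intros G a b d H [n1 H1] [n2 H2]. exists (S (max n1 n2)).
  eapply DorL; eauto; eapply lift; eauto; lia. Qed.
Lemma Dx_orR1 : forall G a b, Dx G (Some a) -> Dx G (Some (Or a b)).
Proof. intros G a b [n H]. exists (S n). apply DorR1; auto. Qed.
Lemma Dx_orR2 : forall G a b, Dx G (Some b) -> Dx G (Some (Or a b)).
Proof. intros G a b [n H]. exists (S n). apply DorR2; auto. Qed.
Lemma Dx_impR : forall G a b, Dx (a :: G) (Some b) -> Dx G (Some (Imp a b)).
Proof. intros G a b [n H]. exists (S n). apply DimpR; auto. Qed.
Lemma Dx_impL : forall G a b d, In (Imp a b) G -> Dx G (Some a) -> Dx (b :: G) d -> Dx G d.
Proof. intros G a b d H [n1 H1] [n2 H2]. exists (S (max n1 n2)).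
  eapply DimpL; eauto; eapply lift; eauto; lia. Qed.
Lemma Dx_init : forall G p, In (Var p) G -> Dx G (Some (Var p)).
Proof. intros; exists 0; apply Dinit; auto. Qed.
Lemma Dx_bot : forall G d, In Bot G -> Dx G d.
Proof. intros; exists 0; apply Dbot; auto. Qed.

Definition EqPrem (rs : list (form * form)) a :=
  forall r s, In (r, s) rs -> Dx [a] (Some r) /\ Dx [r] (Some a).

Lemma EqPrem_n : forall rs a, EqPrem rs a -> exists n,
  (forall r s, In (r, s) rs -> D n [a] (Some r)) /\
  (forall r s, In (r, s) rs -> D n [r] (Some a)).
Proof.
  intros rs a H.
  destruct (Dx_list rs (fun _ => [a]) (fun p => Some (fst p))) as [n1 H1].
  { intros [r s] Hp. apply (H r s Hp). }
  destruct (Dx_list rs (fun p => [fst p]) (fun p => Some a)) as [n2 H2].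
  { intros [r s] Hp. apply (H r s Hp). }
  exists (max n1 n2). split; intros r s Hp.
  - eapply lift. apply (H1 (r, s) Hp). lia.
  - eapply lift. apply (H2 (r, s) Hp). lia.
Qed.

Lemma Dx_box : forall G rs a b, incl (boxes rs) G -> EqPrem rs a ->
  Dx (map snd rs) (Some b) -> Dx G (Some (BoxArr a b)).
Proof.
  intros G rs a b Hi He [n3 H3]. destruct (EqPrem_n _ _ He) as [n [H1 H2]].
  exists (S (max n n3)). eapply Dbox; eauto.
  all: intros; eapply lift; eauto; lia.
Qed.

Lemma Dx_dia : forall G rs a b e t, incl (boxes rs) G -> In (DiaArr a b) G -> EqPrem rs a ->
  Dx [a] (Some e) -> Dx [e] (Some a) ->
  Dx (b :: map snd rs) (Some t) -> Dx G (Some (DiaArr e t)).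
Proof.
  intros G rs a b e t Hi Hd He [n3 H3] [n4 H4] [n5 H5].
  destruct (EqPrem_n _ _ He) as [n [H1 H2]].
  exists (S (max n (max n3 (max n4 n5)))). eapply Ddia; eauto.
  all: try (intros; eapply lift; eauto; lia).
  all: eapply lift; eauto; lia.
Qed.

Lemma Dx_bd : forall G rs a b d, incl (boxes rs) G -> In (DiaArr a b) G -> EqPrem rs a ->
  Dx (b :: map snd rs) None -> Dx G d.
Proof.
  intros G rs a b d Hi Hd He [n3 H3].
  destruct (EqPrem_n _ _ He) as [n [H1 H2]].
  exists (S (max n n3)). eapply Dbd; eauto.
  all: try (intros; eapply lift; eauto; lia).
  all: eapply lift; eauto; lia.
Qed.

Lemma ident : forall A G, In A G -> Dx G (Some A).
Proof.
  induction A; intros G H.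
  - apply Dx_init; auto.
  - apply Dx_bot; auto.
  - eapply Dx_andL; eauto. apply Dx_andR; [apply IHA1|apply IHA2]; simpl; auto.
  - eapply Dx_orL; eauto. apply Dx_orR1, IHA1; simpl; auto. apply Dx_orR2, IHA2; simpl; auto.
  - apply Dx_impR. eapply Dx_impL. right; eauto. apply IHA1; simpl; auto.
    apply IHA2; simpl; auto.
  - apply Dx_box with (rs := [(A1, A2)]). inc.
    intros r s [E|[]]; inversion E; subst; split; apply IHA1; simpl; auto.
    apply IHA2; simpl; auto.
  - apply Dx_dia with (rs := []) (a := A1) (b := A2); auto. inc.
    intros r s []. apply IHA1; simpl; auto. apply IHA1; simpl; auto.
    apply IHA2; simpl; auto.
Qed.

Definition CutFor A := forall G d, Dx G (Some A) -> Dx (A :: G) d -> Dx G d.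

Definition sub B A := match A with
  | And a b | Or a b | Imp a b | BoxArr a b | DiaArr a b => B = a \/ B = b
  | _ => False end.

Inductive RD (G : list form) : form -> Prop :=
| RandR a b : Dx G (Some a) -> Dx G (Some b) -> RD G (And a b)
| RorR1 a b : Dx G (Some a) -> RD G (Or a b)
| RorR2 a b : Dx G (Some b) -> RD G (Or a b)
| RimpR a b : Dx (a :: G) (Some b) -> RD G (Imp a b)
| Rbox rs a b : incl (boxes rs) G -> EqPrem rs a -> Dx (map snd rs) (Some b) -> RD G (BoxArr a b)
| Rdia rs a b e t : incl (boxes rs) G -> In (DiaArr a b) G -> EqPrem rs a ->
    Dx [a] (Some e) -> Dx [e] (Some a) -> Dx (b :: map snd rs) (Some t) -> RD G (DiaArr e t).

Lemma EqPrem_of : forall n rs a,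
  (forall r s, In (r, s) rs -> D n [a] (Some r)) ->
  (forall r s, In (r, s) rs -> D n [r] (Some a)) -> EqPrem rs a.
Proof. intros n rs a H1 H2 r s H. split; exists n; eauto. Qed.

Lemma eq_tr : forall x a c, CutFor x -> Dx [a] (Some x) -> Dx [x] (Some c) -> Dx [a] (Some c).
Proof. intros x a c Hc H1 H2. apply Hc; auto. eapply Dx_wk; eauto. inc. Qed.

Lemma incl_boxes_cons : forall rs A G, incl (boxes rs) (A :: G) ->
  incl (boxes rs) G \/ exists p q, A = BoxArr p q /\ In (p, q) rs.
Proof.
  induction rs as [|[r s] rs IH]; intros A G H.
  - left; intros x [].
  - destruct (fdec A (BoxArr r s)) as [E|E].
    + right; exists r, s; simpl; auto.
    + destruct (IH A G) as [H1|(p&q&H1&H2)].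
      * intros x Hx; apply H; simpl; auto.
      * left. intros x [<-|Hx]; auto.
        destruct (H (BoxArr r s)) as [E'|E']; simpl; auto. congruence.
      * right; exists p, q; simpl; auto.
Qed.

Lemma incl_boxes_nb : forall rs A G, incl (boxes rs) (A :: G) ->
  (forall p q, A <> BoxArr p q) -> incl (boxes rs) G.
Proof.
  intros rs A G H N. destruct (incl_boxes_cons rs A G H) as [H1|(p&q&H1&_)]; auto.
  exfalso; eapply N; eauto.
Qed.

Definition flt (x : form * form) (rs : list (form * form)) :=
  filter (fun p => if pdec p x then false else true) rs.

Lemma in_flt : forall x p rs, In p (flt x rs) <-> In p rs /\ p <> x.
Proof.
  intros x p rs. unfold flt. rewrite filter_In. destruct (pdec p x); intuition congruence.
Qed.

Lemma in_boxes : forall x rs, In x (boxes rs) <-> exists r s, x = BoxArr r s /\ In (r, s) rs.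
Proof.
  intros x rs. unfold boxes. rewrite in_map_iff. split.
  - intros [[r s] [<- H]]; exists r, s; auto.
  - intros (r&s&->&H); exists (r, s); auto.
Qed.

Lemma in_snd : forall (x : form) (rs : list (form * form)), In x (map snd rs) <-> exists r, In (r, x) rs.
Proof.
  intros x rs. rewrite in_map_iff. split.
  - intros [[r s] [<- H]]; exists r; auto.
  - intros [r H]; exists (r, x); auto.
Qed.

Lemma EqPrem_app : forall rs1 rs2 a, EqPrem rs1 a -> EqPrem rs2 a -> EqPrem (rs1 ++ rs2) a.
Proof. intros rs1 rs2 a H1 H2 r s H. apply in_app_or in H. destruct H as [H|H]; eauto. Qed.

Lemma box_merge : forall p q G rsD rs a, CutFor p -> CutFor q ->
  incl (boxes rsD) G -> EqPrem rsD p -> Dx (map snd rsD) (Some q) ->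
  incl (boxes rs) (BoxArr p q :: G) -> EqPrem rs a -> In (p, q) rs ->
  exists rs', incl (boxes rs') G /\ EqPrem rs' a /\
    (forall L dd, Dx (L ++ map snd rs) dd -> Dx (L ++ map snd rs') dd).
Proof.
  intros p q G rsD rs a Cp Cq HiD HeD HmD Hi He Hin.
  exists (rsD ++ flt (p, q) rs). split; [|split].
  - unfold boxes; rewrite map_app. apply incl_app; auto.
    intros x Hx. apply in_boxes in Hx as (r&s&->&Hx). apply in_flt in Hx as [Hx Hne].
    destruct (Hi (BoxArr r s)) as [E|E]. apply in_boxes; eauto. congruence. auto.
  - apply EqPrem_app.
    + intros r s Hr. destruct (He p q Hin) as [H1 H2]. destruct (HeD r s Hr) as [H3 H4].
      split; [apply (eq_tr p a r Cp H1 H3)|apply (eq_tr p r a Cp H4 H2)].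
    + intros r s Hr. apply in_flt in Hr as [Hr _]. apply He with (s := s); exact Hr.
  - intros L dd H. apply Cq.
    + eapply Dx_wk; eauto. intros x Hx. rewrite map_app. auto with datatypes.
    + eapply Dx_wk; eauto. intros x Hx. apply in_app_or in Hx as [Hx|Hx]; simpl; auto with datatypes.
      apply in_snd in Hx as [r Hx]. destruct (pdec (r, x) (p, q)) as [E|E].
      * inversion E; auto.
      * right. apply in_or_app; right. rewrite map_app. apply in_or_app; right.
        apply in_snd. exists r. apply in_flt; auto.
Qed.

Lemma dia_merge : forall e0 t0 G rsD a0 b0 rs X, CutFor e0 -> CutFor t0 ->
  incl (boxes rsD) G -> EqPrem rsD a0 -> Dx [a0] (Some e0) -> Dx [e0] (Some a0) ->
  Dx (b0 :: map snd rsD) (Some t0) ->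
  incl (boxes rs) G -> EqPrem rs e0 -> Dx (t0 :: map snd rs) X ->
  incl (boxes (rsD ++ rs)) G /\ EqPrem (rsD ++ rs) a0 /\ Dx (b0 :: map snd (rsD ++ rs)) X.
Proof.
  intros e0 t0 G rsD a0 b0 rs X Ce Ct HiD HeD H1 H2 HmD Hi He Hm. split; [|split].
  - unfold boxes; rewrite map_app; apply incl_app; auto.
  - apply EqPrem_app; auto. intros r s Hr. destruct (He r s Hr) as [H3 H4].
    split; [apply (eq_tr e0 a0 r Ce H1 H3)|apply (eq_tr e0 r a0 Ce H4 H2)].
  - apply Ct.
    + eapply Dx_wk; eauto. rewrite map_app. inc.
    + eapply Dx_wk; eauto. rewrite map_app. inc.
Qed.

Lemma RD_box_inv : forall G p q, RD G (BoxArr p q) ->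
  exists rs, incl (boxes rs) G /\ EqPrem rs p /\ Dx (map snd rs) (Some q).
Proof. intros G p q H; inversion H; subst; eauto. Qed.

Lemma RD_dia_inv : forall G e t, RD G (DiaArr e t) ->
  exists rs a b, incl (boxes rs) G /\ In (DiaArr a b) G /\ EqPrem rs a /\
    Dx [a] (Some e) /\ Dx [e] (Some a) /\ Dx (b :: map snd rs) (Some t).
Proof. intros G e t H; inversion H; subst; eauto 10. Qed.

Lemma em_analysis : forall A, (forall B, sub B A -> CutFor B) -> forall n G m d,
  (forall n' m' G' d', n' + m' < n + m -> D n' G' (Some A) -> D m' (A :: G') d' -> Dx G' d') ->
  D n G (Some A) -> RD G A -> D m (A :: G) d -> Dx G d.
Proof.
  intros A Hsub n G m d IHN HD HR HE.
  assert (IHc : forall m' G' L d', m' < m -> incl G G' -> D m' L d' -> incl L (A :: G') -> Dx G' d').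
  { intros m' G' L d' Hm HG HL HLi. eapply (IHN n m'). lia. eapply wk; eauto.
    eapply wk; eauto. }
  inversion HE; subst.
  - destruct H as [E|H]; [subst A; inversion HR|]. apply Dx_init; auto.
  - destruct H as [E|H]; [subst A; inversion HR|]. apply Dx_bot; auto.
  - assert (K : Dx (a :: b :: G) d). { apply (IHc n0 (a :: b :: G) _ d ltac:(lia) ltac:(inc) H0); inc. }
    destruct H as [E|H]; [subst A|eapply Dx_andL; eauto].
    inversion HR; subst.
    assert (Ca : CutFor a) by (apply Hsub; simpl; auto).
    assert (Cb : CutFor b) by (apply Hsub; simpl; auto).
    apply Ca; auto. apply Cb. eapply Dx_wk; eauto. inc. eapply Dx_wk; eauto. inc.
  - apply Dx_andR; [apply (IHc n0 G _ _ ltac:(lia) ltac:(inc) H); inc|apply (IHc n0 G _ _ ltac:(lia) ltac:(inc) H0); inc].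
  - assert (K1 : Dx (a :: G) d). { apply (IHc n0 (a :: G) _ d ltac:(lia) ltac:(inc) H0); inc. }
    assert (K2 : Dx (b :: G) d). { apply (IHc n0 (b :: G) _ d ltac:(lia) ltac:(inc) H1); inc. }
    destruct H as [E|H]; [subst A|eapply Dx_orL; eauto].
    inversion HR; subst.
    + apply (Hsub a); simpl; auto.
    + apply (Hsub b); simpl; auto.
  - apply Dx_orR1; apply (IHc n0 G _ _ ltac:(lia) ltac:(inc) H); inc.
  - apply Dx_orR2; apply (IHc n0 G _ _ ltac:(lia) ltac:(inc) H); inc.
  - apply Dx_impR; apply (IHc n0 (a :: G) _ _ ltac:(lia) ltac:(inc) H); inc.
  - assert (K1 : Dx G (Some a)). { apply (IHc n0 G _ _ ltac:(lia) ltac:(inc) H0); inc. }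
    assert (K2 : Dx (b :: G) d). { apply (IHc n0 (b :: G) _ d ltac:(lia) ltac:(inc) H1); inc. }
    destruct H as [E|H]; [subst A|eapply Dx_impL; eauto].
    inversion HR; subst.
    assert (Ca : CutFor a) by (apply Hsub; simpl; auto).
    assert (Cb : CutFor b) by (apply Hsub; simpl; auto).
    apply Cb; auto.
  -
    rename a into a', b into b'.
    destruct (incl_boxes_cons rs A G H) as [Hi|(p&q&HA&Hin)].
    + eapply Dx_box; eauto. eapply EqPrem_of; eauto. exists n0; auto.
    + subst A. destruct (RD_box_inv _ _ _ HR) as (rsD&HiD&HeD&HmD).
      assert (Cp : CutFor p) by (apply Hsub; simpl; auto).
      assert (Cq : CutFor q) by (apply Hsub; simpl; auto).
      destruct (box_merge p q G rsD rs a' Cp Cq HiD HeD HmD H ltac:(eapply EqPrem_of; eauto) Hin)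
        as (rs'&Hi'&He'&Hm').
      eapply Dx_box; eauto. apply (Hm' []). exists n0; auto.
  -
    rename a into a', b into b'.
    destruct H0 as [HA|Hin].
    + subst A. assert (Hi : incl (boxes rs) G) by (eapply incl_boxes_nb; eauto; congruence).
      destruct (RD_dia_inv _ _ _ HR) as (rsD&a0&b0&HiD&HdD&HeD&H1D&H2D&HmD).
      assert (Ce : CutFor a') by (apply Hsub; simpl; auto).
      assert (Ct : CutFor b') by (apply Hsub; simpl; auto).
      destruct (dia_merge a' b' G rsD a0 b0 rs (Some t) Ce Ct HiD HeD H1D H2D HmD Hi
        ltac:(eapply EqPrem_of; eauto) ltac:(exists n0; auto)) as (Hi'&He'&Hm').
      apply (Dx_dia G (rsD ++ rs) a0 b0 e t Hi' HdD He');
        [apply (eq_tr a' a0 e Ce H1D); exists n0; auto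
        |apply (eq_tr a' e a0 Ce); [exists n0; auto|auto]
        |exact Hm'].
    + destruct (incl_boxes_cons rs A G H) as [Hi|(p&q&HA&Hin')].
      * eapply Dx_dia; eauto. eapply EqPrem_of; eauto. exists n0; auto. exists n0; auto.
        exists n0; auto.
      * subst A. destruct (RD_box_inv _ _ _ HR) as (rsD&HiD&HeD&HmD).
        assert (Cp : CutFor p) by (apply Hsub; simpl; auto).
        assert (Cq : CutFor q) by (apply Hsub; simpl; auto).
        destruct (box_merge p q G rsD rs a' Cp Cq HiD HeD HmD H ltac:(eapply EqPrem_of; eauto) Hin')
          as (rs'&Hi'&He'&Hm').
        eapply Dx_dia; eauto. exists n0; auto. exists n0; auto. apply (Hm' [b']). exists n0; auto.
  -
    rename a into a', b into b'.
    destruct H0 as [HA|Hin].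
    + subst A. assert (Hi : incl (boxes rs) G) by (eapply incl_boxes_nb; eauto; congruence).
      destruct (RD_dia_inv _ _ _ HR) as (rsD&a0&b0&HiD&HdD&HeD&H1D&H2D&HmD).
      assert (Ce : CutFor a') by (apply Hsub; simpl; auto).
      assert (Ct : CutFor b') by (apply Hsub; simpl; auto).
      destruct (dia_merge a' b' G rsD a0 b0 rs None Ce Ct HiD HeD H1D H2D HmD Hi
        ltac:(eapply EqPrem_of; eauto) ltac:(exists n0; auto)) as (Hi'&He'&Hm').
      eapply Dx_bd; eauto.
    + destruct (incl_boxes_cons rs A G H) as [Hi|(p&q&HA&Hin')].
      * eapply Dx_bd; eauto. eapply EqPrem_of; eauto. exists n0; auto.
      * subst A. destruct (RD_box_inv _ _ _ HR) as (rsD&HiD&HeD&HmD).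
        assert (Cp : CutFor p) by (apply Hsub; simpl; auto).
        assert (Cq : CutFor q) by (apply Hsub; simpl; auto).
        destruct (box_merge p q G rsD rs a' Cp Cq HiD HeD HmD H ltac:(eapply EqPrem_of; eauto) Hin')
          as (rs'&Hi'&He'&Hm').
        eapply Dx_bd; eauto. apply (Hm' [b']). exists n0; auto.
Qed.

Lemma cut_main : forall A, (forall B, sub B A -> CutFor B) ->
  forall N n m G d, n + m < N -> D n G (Some A) -> D m (A :: G) d -> Dx G d.
Proof.
  intros A Hsub N. induction N as [|N IHN]; intros n m G d Hlt HD HE; [lia|].
  assert (IH' : forall n' m' G' d', n' + m' < n + m -> D n' G' (Some A) -> D m' (A :: G') d' -> Dx G' d').
  { intros; eapply IHN; eauto. lia. }
  inversion HD; subst.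
  - exists m. eapply wk; eauto. inc.
  - apply Dx_bot; auto.
  - eapply Dx_andL; eauto. apply (IH' n0 m); [lia|assumption|eapply wk; [exact HE|lia|inc]].
  - eapply em_analysis; eauto. constructor; exists n0; auto.
  - eapply Dx_orL; eauto.
    apply (IH' n0 m); [lia|assumption|eapply wk; [exact HE|lia|inc]].
    apply (IH' n0 m); [lia|assumption|eapply wk; [exact HE|lia|inc]].
  - eapply em_analysis; eauto. constructor; exists n0; auto.
  - eapply em_analysis; eauto. apply RorR2; exists n0; auto.
  - eapply em_analysis; eauto. constructor; exists n0; auto.
  - eapply Dx_impL; eauto. exists n0; auto.
    apply (IH' n0 m); [lia|assumption|eapply wk; [exact HE|lia|inc]].
  - eapply em_analysis; eauto. econstructor; eauto. eapply EqPrem_of; eauto. exists n0; auto.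
  - eapply em_analysis; eauto. econstructor; eauto. eapply EqPrem_of; eauto.
    exists n0; auto. exists n0; auto. exists n0; auto.
  - eapply Dx_bd; eauto. eapply EqPrem_of; eauto. exists n0; auto.
Qed.

Theorem cut : forall A, CutFor A.
Proof.
  assert (H : forall A, (forall B, sub B A -> CutFor B) -> CutFor A).
  { intros A Hs G d [n Hn] [m Hm]. eapply (cut_main A Hs (S (n + m))); eauto. }
  induction A; apply H; simpl; intros B Hb; try contradiction;
    destruct Hb; subst; auto.
Qed.

Inductive Hc (G : list form) : form -> Prop :=
| Hc_hyp f : In f G -> Hc G f
| Hc_thm f : HDer f -> Hc G f
| Hc_mp f g : Hc G (Imp f g) -> Hc G f -> Hc G g.

Lemma HI : forall a, HDer (Imp a a).
Proof.
  intros a. eapply H_MP. eapply H_MP. apply (H_S a (Imp a a) a).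
  apply H_K. apply (H_K a a).
Qed.

Lemma ded : forall G a b, Hc (a :: G) b -> Hc G (Imp a b).
Proof.
  intros G a b H. induction H.
  - destruct H as [<-|H]. apply Hc_thm, HI.
    eapply Hc_mp. apply Hc_thm, H_K. apply Hc_hyp; auto.
  - eapply Hc_mp. apply Hc_thm, H_K. apply Hc_thm; auto.
  - eapply Hc_mp. eapply Hc_mp. apply Hc_thm, H_S. eauto. eauto.
Qed.

Lemma Hc_wk : forall G f, Hc G f -> forall G', incl G G' -> Hc G' f.
Proof. induction 1; intros; [apply Hc_hyp; auto|apply Hc_thm; auto|eapply Hc_mp; eauto]. Qed.

Lemma Hc_subst : forall G f, Hc G f -> forall G', (forall x, In x G -> Hc G' x) -> Hc G' f.
Proof. induction 1; intros; [auto|apply Hc_thm; auto|eapply Hc_mp; eauto]. Qed.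

Lemma Hc_nil : forall f, Hc [] f -> HDer f.
Proof. intros f H; induction H; [destruct H|auto|eapply H_MP; eauto]. Qed.

Lemma mp2 : forall G f g, HDer (Imp f g) -> Hc G f -> Hc G g.
Proof. intros; eapply Hc_mp; [apply Hc_thm; eauto|auto]. Qed.
Lemma Hc_and : forall G a b, Hc G a -> Hc G b -> Hc G (And a b).
Proof. intros. eapply Hc_mp; [eapply mp2; [apply H_AI|]|]; eauto. Qed.
Lemma Hc_and1 : forall G a b, Hc G (And a b) -> Hc G a.
Proof. intros; eapply mp2; [apply H_AE1|eauto]. Qed.
Lemma Hc_and2 : forall G a b, Hc G (And a b) -> Hc G b.
Proof. intros; eapply mp2; [apply H_AE2|eauto]. Qed.
Lemma th_imp : forall a b, Hc [a] b -> HDer (Imp a b).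
Proof. intros; apply Hc_nil, ded; auto. Qed.
Lemma th_iff : forall a b, Hc [a] b -> Hc [b] a -> HDer (Iff a b).
Proof. intros. apply Hc_nil. apply Hc_and; apply ded; auto. Qed.
Lemma hyp0 : forall a G, Hc (a :: G) a.
Proof. intros; apply Hc_hyp; simpl; auto. Qed.
Lemma iff1 : forall G a b, HDer (Iff a b) -> Hc G a -> Hc G b.
Proof. intros. eapply Hc_mp; [|eauto]. eapply Hc_and1. apply Hc_thm; eauto. Qed.
Lemma iff2 : forall G a b, HDer (Iff a b) -> Hc G b -> Hc G a.
Proof. intros. eapply Hc_mp; [|eauto]. eapply Hc_and2. apply Hc_thm; eauto. Qed.

Lemma mono_box : forall a x y, HDer (Imp x y) -> HDer (Imp (BoxArr a x) (BoxArr a y)).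
Proof.
  intros a x y H. apply th_imp.
  assert (E : HDer (Iff x (And x y))).
  { apply th_iff. apply Hc_and. apply hyp0. eapply mp2; eauto. apply hyp0.
    eapply Hc_and1, hyp0. }
  apply H_RCbox with (a := a) in E.
  eapply Hc_and2. eapply mp2. apply H_CMbox. eapply iff1; eauto. apply hyp0.
Qed.

Lemma HTop : forall G, Hc G Top.
Proof. intros; apply ded, hyp0. Qed.

Lemma box_sound : forall a rs, (forall r s, In (r, s) rs -> HDer (Iff a r)) ->
  forall b, Hc (map snd rs) b -> Hc (boxes rs) (BoxArr a b).
Proof.
  intros a rs He. induction rs as [|[r s] rs IH]; intros b Hb.
  - apply Hc_thm. apply Hc_nil in Hb.
    eapply Hc_nil, iff1. apply H_RCbox. apply th_iff. apply Hc_thm; auto. apply HTop.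
    apply Hc_thm, H_CNbox.
  - simpl in Hb. apply ded in Hb. apply IH in Hb; [|intros; eapply He; simpl; eauto].
    assert (H1 : Hc (boxes ((r, s) :: rs)) (BoxArr a s)).
    { eapply iff2. apply H_RAbox. apply He with (s := s); simpl; auto. apply hyp0. }
    assert (H2 : Hc (boxes ((r, s) :: rs)) (BoxArr a (Imp s b))).
    { eapply Hc_wk; eauto. intros x Hx; simpl; auto. }
    eapply mp2. apply mono_box with (x := And s (Imp s b)).
    apply th_imp. eapply Hc_mp. eapply Hc_and2, hyp0. eapply Hc_and1, hyp0.
    eapply mp2. apply H_CCbox. apply Hc_and; auto.
Qed.

Definition bv (d : option form) := match d with None => Bot | Some x => x end.

Lemma D_sound : forall n G d, D n G d -> Hc G (bv d).
Proof.
  induction 1; simpl in *.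
  - apply Hc_hyp; auto.
  - eapply mp2. apply H_EFQ. apply Hc_hyp; auto.
  - apply ded, ded in IHD. eapply Hc_mp. eapply Hc_mp. eauto.
    apply (Hc_and2 _ a b), Hc_hyp; eauto. apply (Hc_and1 _ a b), Hc_hyp; eauto.
  - apply Hc_and; auto.
  - apply ded in IHD1, IHD2. eapply Hc_mp. eapply Hc_mp. eapply mp2. apply H_OE.
    exact IHD1. exact IHD2. apply Hc_hyp; eauto.
  - eapply mp2. apply H_OI1. auto.
  - eapply mp2. apply H_OI2. auto.
  - apply ded; auto.
  - apply ded in IHD2. eapply Hc_mp. eauto. eapply Hc_mp. apply Hc_hyp; eauto. auto.
  - eapply Hc_wk; [|eauto]. apply box_sound; auto.
    intros r s Hr. apply th_iff; eauto.
  - assert (Hb : Hc G (BoxArr a (Imp b t))).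
    { eapply Hc_wk; [|eauto]. apply box_sound.
      intros r s Hr. apply th_iff; eauto. apply ded; auto. }
    eapply iff1. apply H_RAdia. apply th_iff; eauto.
    eapply Hc_mp. eapply mp2. apply H_CKdia. eauto. apply Hc_hyp; auto.
  - assert (Hb : Hc G (BoxArr a (Imp b Bot))).
    { eapply Hc_wk; [|eauto]. apply box_sound.
      intros r s Hr. apply th_iff; eauto. apply ded; auto. }
    eapply mp2. apply H_EFQ. eapply mp2. apply H_CNdia with (a := a).
    eapply Hc_mp. eapply mp2. apply H_CKdia. eauto. apply Hc_hyp; auto.
Qed.

Lemma perm_in : forall (G G' : list form) x, Permutation G' G -> In x G -> In x G'.
Proof. intros. eapply Permutation_in; [symmetry|]; eauto. Qed.

Fixpoint SD_D G d (H : SDer G d) {struct H} : Dx G d.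
Proof.
  destruct H.
  - apply Dx_init. eapply perm_in; eauto; rewrite in_app_iff; simpl; auto.
  - apply Dx_bot. eapply perm_in; eauto; rewrite in_app_iff; simpl; auto.
  - apply (Dx_andL G' a b). eapply perm_in; eauto; rewrite in_app_iff; simpl; auto.
    eapply Dx_wk. apply (SD_D _ _ H). intros x Hx. rewrite in_app_iff in Hx. simpl in *.
    destruct Hx as [Hx|[<-|[<-|[]]]]; auto. right; right. eapply perm_in; eauto; rewrite in_app_iff; simpl; auto.
  - apply Dx_andR; apply SD_D; auto.
  - apply (Dx_orL G' a b). eapply perm_in; eauto; rewrite in_app_iff; simpl; auto.
    eapply Dx_wk. apply (SD_D _ _ H). intros x Hx. rewrite in_app_iff in Hx. simpl in *.
    destruct Hx as [Hx|[<-|[]]]; auto. right. eapply perm_in; eauto; rewrite in_app_iff; simpl; auto.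
    eapply Dx_wk. apply (SD_D _ _ H0). intros x Hx. rewrite in_app_iff in Hx. simpl in *.
    destruct Hx as [Hx|[<-|[]]]; auto. right. eapply perm_in; eauto; rewrite in_app_iff; simpl; auto.
  - apply Dx_orR1; apply SD_D; auto.
  - apply Dx_orR2; apply SD_D; auto.
  - apply Dx_impR. eapply Dx_wk. apply (SD_D _ _ H). inc.
  - apply (Dx_impL G' a b). eapply perm_in; eauto; rewrite in_app_iff; simpl; auto.
    eapply Dx_wk. apply (SD_D _ _ H). intros x Hx. eapply perm_in; eauto.
    eapply Dx_wk. apply (SD_D _ _ H0). intros x Hx. rewrite in_app_iff in Hx. simpl in *.
    destruct Hx as [Hx|[<-|[]]]; auto. right. eapply perm_in; eauto; rewrite in_app_iff; simpl; auto.
  - apply (Dx_box G' rs a b).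
    + intros x Hx. eapply perm_in; eauto; rewrite in_app_iff; simpl; auto.
    + intros r s Hr. destruct (H r s Hr) as [H2 H3]. split; apply SD_D; auto.
    + apply SD_D; auto.
  - apply (Dx_dia G' rs a b e t).
    + intros x Hx. eapply perm_in; eauto; rewrite !in_app_iff; simpl; auto.
    + eapply perm_in; eauto; rewrite !in_app_iff; simpl; auto.
    + intros r s Hr. destruct (H r s Hr) as [H4 H5]. split; apply SD_D; auto.
    + apply SD_D; auto.
    + apply SD_D; auto.
    + eapply Dx_wk. apply (SD_D _ _ H2). inc.
  - eapply (Dx_bd G' rs a b).
    + intros x Hx. eapply perm_in; eauto; rewrite !in_app_iff; simpl; auto.
    + eapply perm_in; eauto; rewrite !in_app_iff; simpl; auto.
    + intros r s Hr. destruct (H r s Hr) as [H4 H5]. split; apply SD_D; auto.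
    + eapply Dx_wk. apply (SD_D _ _ H0). inc.
Qed.

Lemma in_rem_iff : forall (x y : form) l, In x (remove fdec y l) <-> In x l /\ x <> y.
Proof. intros; split; [apply in_remove|intros [H1 H2]; apply in_in_remove; auto]. Qed.

Ltac incr := let x := fresh "x" in let H := fresh "Hx" in
  intros x H; cbn [In] in *; repeat rewrite in_rem_iff in *; cbn [In] in *;
  intuition (subst; auto; try discriminate).

Lemma boxes_rem : forall rs G (X : form), incl (boxes rs) G -> (forall p q, X <> BoxArr p q) ->
  incl (boxes rs) (remove fdec X G).
Proof.
  intros rs G X H N y Hy. apply in_rem_iff. split; auto.
  apply in_boxes in Hy as (r&s&->&_). intros E; eapply N; eauto.
Qed.

Lemma inv_and : forall n G d, D n G d -> forall a b, In (And a b) G ->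
  D n (a :: b :: remove fdec (And a b) G) d.
Proof.
  induction 1; intros a0 b0 Hin.
  - apply Dinit. right; right. apply in_rem_iff; split; auto; discriminate.
  - apply Dbot. right; right. apply in_rem_iff; split; auto; discriminate.
  - destruct (fdec (And a b) (And a0 b0)) as [E|E].
    + injection E as E1 E2; subst a b. eapply lift with (n := n); [|lia].
      eapply wk. apply (IHD a0 b0). simpl; auto. lia. incr.
    + apply DandL with (a := a) (b := b). right; right. apply in_rem_iff; auto.
      eapply wk. apply (IHD a0 b0). simpl; auto. lia. incr.
  - apply DandR; auto.
  - apply DorL with (a := a) (b := b). right; right. apply in_rem_iff; split; auto; discriminate.
    eapply wk. apply (IHD1 a0 b0). simpl; auto. lia. incr.
    eapply wk. apply (IHD2 a0 b0). simpl; auto. lia. incr.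
  - apply DorR1; auto.
  - apply DorR2; auto.
  - apply DimpR. eapply wk. apply (IHD a0 b0). simpl; auto. lia. incr.
  - apply DimpL with (a := a) (b := b). right; right. apply in_rem_iff; split; [assumption|discriminate].
    auto. eapply wk. apply (IHD2 a0 b0). simpl; auto. lia. incr.
  - eapply Dbox; eauto. eapply incl_tran. apply (boxes_rem rs G (And a0 b0)); [eassumption|intros ? ? ?; discriminate]. incr.
  - eapply Ddia; eauto. eapply incl_tran. apply (boxes_rem rs G (And a0 b0)); [eassumption|intros ? ? ?; discriminate]. incr.
    right; right. apply in_rem_iff; split; auto; discriminate.
  - eapply Dbd; eauto. eapply incl_tran. apply (boxes_rem rs G (And a0 b0)); [eassumption|intros ? ? ?; discriminate]. incr.
    right; right. apply in_rem_iff; split; auto; discriminate.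
Qed.

Lemma inv_or : forall n G d, D n G d -> forall a b, In (Or a b) G ->
  D n (a :: remove fdec (Or a b) G) d /\ D n (b :: remove fdec (Or a b) G) d.
Proof.
  induction 1; intros a0 b0 Hin.
  - split; apply Dinit; right; apply in_rem_iff; split; auto; discriminate.
  - split; apply Dbot; right; apply in_rem_iff; split; auto; discriminate.
  - destruct (IHD a0 b0 ltac:(simpl; auto)) as [I1 I2].
    split; (apply DandL with (a := a) (b := b); [right; apply in_rem_iff; split; [assumption|discriminate]|]).
    eapply wk; [exact I1|lia|incr]. eapply wk; [exact I2|lia|incr].
  - destruct (IHD1 a0 b0 Hin), (IHD2 a0 b0 Hin). split; apply DandR; auto.
  - destruct (fdec (Or a b) (Or a0 b0)) as [E|E].
    + injection E as E1 E2; subst a b. destruct (IHD1 a0 b0 ltac:(simpl; auto)) as [I1 _].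
      destruct (IHD2 a0 b0 ltac:(simpl; auto)) as [_ I2].
      split; (eapply lift with (n := n); [|lia]).
      eapply wk; [exact I1|lia|incr]. eapply wk; [exact I2|lia|incr].
    + destruct (IHD1 a0 b0 ltac:(simpl; auto)) as [I1 I2].
      destruct (IHD2 a0 b0 ltac:(simpl; auto)) as [I3 I4].
      split; (apply DorL with (a := a) (b := b); [right; apply in_rem_iff; split; [assumption|auto]| |]).
      eapply wk; [exact I1|lia|incr]. eapply wk; [exact I3|lia|incr].
      eapply wk; [exact I2|lia|incr]. eapply wk; [exact I4|lia|incr].
  - destruct (IHD a0 b0 Hin). split; apply DorR1; auto.
  - destruct (IHD a0 b0 Hin). split; apply DorR2; auto.
  - destruct (IHD a0 b0 ltac:(simpl; auto)) as [I1 I2].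
    split; apply DimpR. eapply wk; [exact I1|lia|incr]. eapply wk; [exact I2|lia|incr].
  - destruct (IHD1 a0 b0 Hin) as [I1 I2]. destruct (IHD2 a0 b0 ltac:(simpl; auto)) as [I3 I4].
    split; (apply DimpL with (a := a) (b := b); [right; apply in_rem_iff; split; [assumption|discriminate]| |]).
    exact I1. eapply wk; [exact I3|lia|incr]. exact I2. eapply wk; [exact I4|lia|incr].
  - split; (eapply Dbox; eauto); (eapply incl_tran; [apply (boxes_rem rs G (Or a0 b0)); [eassumption|intros ? ? ?; discriminate]|incr]).
  - split; (eapply Ddia; eauto);
      try (eapply incl_tran; [apply (boxes_rem rs G (Or a0 b0)); [eassumption|intros ? ? ?; discriminate]|incr]);
      right; apply in_rem_iff; split; auto; discriminate.
  - split; (eapply Dbd; eauto);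
      try (eapply incl_tran; [apply (boxes_rem rs G (Or a0 b0)); [eassumption|intros ? ? ?; discriminate]|incr]);
      right; apply in_rem_iff; split; auto; discriminate.
Qed.

Lemma inv_imp : forall n G d, D n G d -> forall a b, In (Imp a b) G ->
  D n (b :: remove fdec (Imp a b) G) d.
Proof.
  induction 1; intros a0 b0 Hin.
  - apply Dinit. right. apply in_rem_iff; split; auto; discriminate.
  - apply Dbot. right. apply in_rem_iff; split; auto; discriminate.
  - apply DandL with (a := a) (b := b). right. apply in_rem_iff; split; [assumption|discriminate].
    eapply wk. apply (IHD a0 b0). simpl; auto. lia. incr.
  - apply DandR; auto.
  - apply DorL with (a := a) (b := b). right. apply in_rem_iff; split; [assumption|discriminate].
    eapply wk. apply (IHD1 a0 b0). simpl; auto. lia. incr.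
    eapply wk. apply (IHD2 a0 b0). simpl; auto. lia. incr.
  - apply DorR1; auto.
  - apply DorR2; auto.
  - apply DimpR. eapply wk. apply (IHD a0 b0). simpl; auto. lia. incr.
  - destruct (fdec (Imp a b) (Imp a0 b0)) as [E|E].
    + injection E as E1 E2; subst a b. eapply lift with (n := n); [|lia].
      eapply wk. apply (IHD2 a0 b0). simpl; auto. lia. incr.
    + apply DimpL with (a := a) (b := b). right. apply in_rem_iff; split; eauto.
      auto. eapply wk. apply (IHD2 a0 b0). simpl; auto. lia. incr.
  - eapply Dbox; eauto. eapply incl_tran. apply (boxes_rem rs G (Imp a0 b0)); [eassumption|intros ? ? ?; discriminate]. incr.
  - eapply Ddia; eauto. eapply incl_tran. apply (boxes_rem rs G (Imp a0 b0)); [eassumption|intros ? ? ?; discriminate]. incr.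
    right. apply in_rem_iff; split; auto; discriminate.
  - eapply Dbd; eauto. eapply incl_tran. apply (boxes_rem rs G (Imp a0 b0)); [eassumption|intros ? ? ?; discriminate]. incr.
    right. apply in_rem_iff; split; auto; discriminate.
Qed.

Lemma split_in : forall (X : form) G, In X G ->
  exists G0, Permutation G (G0 ++ [X]) /\ (forall y, In y G -> y <> X -> In y G0).
Proof.
  intros X G H. apply in_split in H as (l1&l2&->). exists (l1 ++ l2). split.
  - rewrite <- Permutation_middle. apply Permutation_cons_append.
  - intros y Hy Hne. rewrite in_app_iff in *. simpl in Hy. intuition congruence.
Qed.

Lemma extract : forall (l G : list form), NoDup l -> incl l G -> exists G0, Permutation G (G0 ++ l).
Proof.
  induction l as [|x l IH]; intros G Hn Hi.
  - exists G; rewrite app_nil_r; auto.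
  - inversion Hn; subst. destruct (split_in x G) as (G1&HP&HG1). apply Hi; simpl; auto.
    destruct (IH G1) as (G0&HP0); auto.
    { intros y Hy. apply HG1. apply Hi; simpl; auto. intros ->; contradiction. }
    exists G0. rewrite HP. rewrite HP0. rewrite <- app_assoc. apply Permutation_app_head.
    simpl. symmetry. apply Permutation_cons_append.
Qed.

Lemma boxes_nodup : forall rs, NoDup (boxes (nodup pdec rs)).
Proof.
  intros rs. unfold boxes. apply FinFun.Injective_map_NoDup.
  - intros [a b] [c d] E; simpl in E; inversion E; auto.
  - apply NoDup_nodup.
Qed.

Lemma incl_boxes_nodup : forall rs G, incl (boxes rs) G -> incl (boxes (nodup pdec rs)) G.
Proof.
  intros rs G H x Hx. apply H. apply in_boxes in Hx as (r&s&->&Hx).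
  apply in_boxes. exists r, s. split; auto. apply nodup_In in Hx; auto.
Qed.

Lemma snd_nodup : forall rs, incl (map snd rs) (map snd (nodup pdec rs)).
Proof.
  intros rs x Hx. apply in_snd in Hx as [r Hx]. apply in_snd. exists r. apply nodup_In; auto.
Qed.

Lemma D_SD : forall n G d, D n G d -> forall G', incl G G' -> SDer G' d.
Proof.
  induction n as [|n IH]; intros G d HD G' Hi.
  - inversion HD; subst.
    + destruct (split_in (Var p) G') as (G0&HP&_); auto. eapply S_init; eauto.
    + destruct (split_in Bot G') as (G0&HP&_); auto. eapply S_botL; eauto.
  - inversion HD; subst.
    + destruct (split_in (Var p) G') as (G0&HP&_); auto. eapply S_init; eauto.
    + destruct (split_in Bot G') as (G0&HP&_); auto. eapply S_botL; eauto.
    + destruct (split_in (And a b) G') as (G0&HP&HG0); auto.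
      eapply S_andL; eauto.
      match goal with Hp : D n (a :: b :: G) d |- _ =>
        apply (IH _ _ (inv_and _ _ _ Hp a b ltac:(simpl; auto))) end.
      intros x Hx. cbn [In] in Hx. rewrite in_rem_iff in Hx. cbn [In] in Hx.
      rewrite in_app_iff; simpl. intuition (subst; auto).
    + apply S_andR; eapply IH; eauto.
    + destruct (split_in (Or a b) G') as (G0&HP&HG0); auto.
      destruct (inv_or _ _ _ H1 a b ltac:(simpl; auto)) as [I1 _].
      destruct (inv_or _ _ _ H2 a b ltac:(simpl; auto)) as [_ I2].
      eapply S_orL; [apply (IH _ _ I1)|apply (IH _ _ I2)|exact HP];
      intros x Hx; cbn [In] in Hx; rewrite in_rem_iff in Hx; cbn [In] in Hx;
      rewrite in_app_iff; simpl; intuition (subst; auto).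
    + apply S_orR1; eapply IH; eauto.
    + apply S_orR2; eapply IH; eauto.
    + apply S_impR; eapply IH; eauto. intros x [<-|Hx]; rewrite in_app_iff; simpl; auto.
    + destruct (split_in (Imp a b) G') as (G0&HP&HG0); auto.
      eapply S_impL; eauto.
      * eapply IH; eauto. intros x Hx. eapply Permutation_in; [exact HP|apply Hi; exact Hx].
      * match goal with Hp : D n (b :: G) d |- _ =>
        apply (IH _ _ (inv_imp _ _ _ Hp a b ltac:(simpl; auto))) end.
        intros x Hx. cbn [In] in Hx. rewrite in_rem_iff in Hx. cbn [In] in Hx.
        rewrite in_app_iff; simpl. intuition (subst; auto).
    + destruct (extract _ G' (boxes_nodup rs)) as (G0&HP).
      { eapply incl_tran; eauto. apply incl_boxes_nodup; auto. }
      eapply S_box; eauto.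
      * intros r s Hr. apply nodup_In in Hr. split; eapply IH; try apply incl_refl; match goal with Hq : forall r0 s0, In (r0, s0) rs -> _ |- _ => apply (Hq r s Hr) end.
      * eapply IH; eauto. apply snd_nodup.
    + destruct (extract (boxes (nodup pdec rs) ++ [DiaArr a b]) G') as (G0&HP).
      { apply NoDup_app. apply boxes_nodup. constructor; auto; constructor.
        intros x Hx [<-|[]]. apply in_boxes in Hx as (?&?&E&_); discriminate. }
      { apply incl_app. eapply incl_tran; eauto. apply incl_boxes_nodup; auto.
        intros x [<-|[]]; auto. }
      eapply S_dia; eauto.
      * intros r s Hr. apply nodup_In in Hr. split; eapply IH; try apply incl_refl; match goal with Hq : forall r0 s0, In (r0, s0) rs -> _ |- _ => apply (Hq r s Hr) end.
      * apply (IH _ _ H4); apply incl_refl.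
      * apply (IH _ _ H5); apply incl_refl.
      * eapply IH; eauto. intros x [<-|Hx]; rewrite in_app_iff; simpl; auto.
        left; apply snd_nodup; auto.
    + destruct (extract (boxes (nodup pdec rs) ++ [DiaArr a b]) G') as (G0&HP).
      { apply NoDup_app. apply boxes_nodup. constructor; auto; constructor.
        intros x Hx [<-|[]]. apply in_boxes in Hx as (?&?&E&_); discriminate. }
      { apply incl_app. eapply incl_tran; eauto. apply incl_boxes_nodup; auto.
        intros x [<-|[]]; auto. }
      eapply S_boxdia; eauto.
      * intros r s Hr. apply nodup_In in Hr. split; eapply IH; try apply incl_refl; match goal with Hq : forall r0 s0, In (r0, s0) rs -> _ |- _ => apply (Hq r s Hr) end.
      * eapply IH; eauto. intros x [<-|Hx]; rewrite in_app_iff; simpl; auto.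
        left; apply snd_nodup; auto.
Qed.

Ltac idt := apply ident; simpl; auto 10.

Lemma mp_D : forall G a b, Dx G (Some (Imp a b)) -> Dx G (Some a) -> Dx G (Some b).
Proof.
  intros G a b H1 H2. apply (cut (Imp a b)); auto.
  eapply Dx_impL. left; reflexivity. eapply Dx_wk; eauto. inc. idt.
Qed.

Lemma and_e1 : forall G a b, Dx G (Some (And a b)) -> Dx G (Some a).
Proof. intros G a b H. apply (cut (And a b)); auto. eapply Dx_andL. left; reflexivity. idt. Qed.
Lemma and_e2 : forall G a b, Dx G (Some (And a b)) -> Dx G (Some b).
Proof. intros G a b H. apply (cut (And a b)); auto. eapply Dx_andL. left; reflexivity. idt. Qed.

Lemma imp_e : forall G a b, Dx G (Some (Imp a b)) -> Dx (a :: G) (Some b).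
Proof. intros. eapply mp_D. eapply Dx_wk; eauto. inc. idt. Qed.

Lemma iff_e : forall a r, Dx [] (Some (Iff a r)) -> Dx [a] (Some r) /\ Dx [r] (Some a).
Proof.
  intros a r H. split; apply imp_e; [eapply and_e1|eapply and_e2]; eauto.
Qed.

Lemma EqPrem1 : forall a r s, Dx [a] (Some r) -> Dx [r] (Some a) -> EqPrem [(r, s)] a.
Proof. intros a r s H1 H2 r' s' [E|[]]. inversion E; subst; auto. Qed.
Lemma EqPrem0 : forall a, EqPrem [] a.
Proof. intros a r s []. Qed.

Lemma complete : forall f, HDer f -> Dx [] (Some f).
Proof.
  induction 1.
  - apply Dx_impR, Dx_impR. idt.
  - apply Dx_impR, Dx_impR, Dx_impR.
    apply Dx_impL with (a := a) (b := Imp b c). simpl; auto. idt.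
    apply Dx_impL with (a := a) (b := b). simpl; auto 10. idt.
    apply Dx_impL with (a := b) (b := c). simpl; auto 10. idt. idt.
  - apply Dx_impR. eapply Dx_andL. left; reflexivity. idt.
  - apply Dx_impR. eapply Dx_andL. left; reflexivity. idt.
  - apply Dx_impR, Dx_impR, Dx_andR; idt.
  - apply Dx_impR, Dx_orR1; idt.
  - apply Dx_impR, Dx_orR2; idt.
  - apply Dx_impR, Dx_impR, Dx_impR. apply Dx_orL with (a := a) (b := b). simpl; auto.
    apply Dx_impL with (a := a) (b := c). simpl; auto 10. idt. idt.
    apply Dx_impL with (a := b) (b := c). simpl; auto 10. idt. idt.
  - apply Dx_impR, Dx_bot. simpl; auto.
  - eapply mp_D; eauto.
  - apply Dx_impR, Dx_andR.
    + apply Dx_box with (rs := [(a, And b c)]). inc. apply EqPrem1; idt.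
      eapply Dx_andL. left; reflexivity. idt.
    + apply Dx_box with (rs := [(a, And b c)]). inc. apply EqPrem1; idt.
      eapply Dx_andL. left; reflexivity. idt.
  - apply Dx_impR. eapply Dx_andL. left; reflexivity.
    apply Dx_box with (rs := [(a, b); (a, c)]). inc.
    intros r s [E|[E|[]]]; inversion E; subst; split; idt.
    apply Dx_andR; idt.
  - apply Dx_box with (rs := []). inc. apply EqPrem0. apply Dx_impR, Dx_bot; simpl; auto.
  - apply Dx_impR. apply Dx_bd with (rs := []) (a := a) (b := Bot). inc. simpl; auto.
    apply EqPrem0. apply Dx_bot; simpl; auto.
  - apply Dx_impR, Dx_impR.
    apply Dx_dia with (rs := [(a, Imp b c)]) (a := a) (b := b). inc. simpl; auto.
    apply EqPrem1; idt. idt. idt.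
    apply Dx_impL with (a := b) (b := c). simpl; auto. idt. idt.
  - destruct (iff_e _ _ IHHDer) as [H1 H2]. apply Dx_andR; apply Dx_impR.
    + apply Dx_box with (rs := [(a, b)]). inc. apply EqPrem1; auto. idt.
    + apply Dx_box with (rs := [(r, b)]). inc. apply EqPrem1; auto. idt.
  - destruct (iff_e _ _ IHHDer) as [H1 H2]. apply Dx_andR; apply Dx_impR.
    + apply Dx_box with (rs := [(a, b)]). inc. apply EqPrem1; idt. auto.
    + apply Dx_box with (rs := [(a, c)]). inc. apply EqPrem1; idt. auto.
  - destruct (iff_e _ _ IHHDer) as [H1 H2]. apply Dx_andR; apply Dx_impR.
    + apply Dx_dia with (rs := []) (a := a) (b := b). inc. simpl; auto. apply EqPrem0.
      auto. auto. idt.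
    + apply Dx_dia with (rs := []) (a := r) (b := b). inc. simpl; auto. apply EqPrem0.
      auto. auto. idt.
  - destruct (iff_e _ _ IHHDer) as [H1 H2]. apply Dx_andR; apply Dx_impR.
    + apply Dx_dia with (rs := []) (a := a) (b := b). inc. simpl; auto. apply EqPrem0.
      idt. idt. auto.
    + apply Dx_dia with (rs := []) (a := a) (b := c). inc. simpl; auto. apply EqPrem0.
      idt. idt. auto.
Qed.

Lemma conj_build : forall gs g G, Dx G (Some g) -> (forall x, In x gs -> Dx G (Some x)) ->
  Dx G (Some (fold_left And gs g)).
Proof.
  induction gs as [|h gs IH]; intros g G H1 H2; simpl; auto.
  apply IH. apply Dx_andR; auto. apply H2; simpl; auto. intros; apply H2; simpl; auto.
Qed.

Lemma conj_proj : forall gs g G, Hc G (fold_left And gs g) -> forall x, In x (g :: gs) -> Hc G x.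
Proof.
  induction gs as [|h gs IH]; intros g G H x Hx; simpl in *.
  - destruct Hx as [<-|[]]; auto.
  - specialize (IH _ _ H). destruct Hx as [<-|[<-|Hx]].
    + eapply Hc_and1, IH; simpl; auto.
    + eapply Hc_and2, IH; simpl; auto.
    + apply IH; simpl; auto.
Qed.

Lemma bot_none : forall G d, Dx G (Some (bv d)) -> Dx G d.
Proof.
  intros G [x|] H; auto. apply (cut Bot); auto. apply Dx_bot; simpl; auto.
Qed.

Theorem theorem5 : forall (G : list form) (D : option form),
  SDer G D <-> HDer (iota G D).
Proof.
  intros G d. split.
  - intros H. destruct (SD_D _ _ H) as [n Hn]. apply D_sound in Hn.
    destruct G as [|g gs]; simpl.
    + apply Hc_nil in Hn. destruct d; auto.
    + apply th_imp. eapply Hc_subst. exact Hn.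
      intros x Hx. eapply conj_proj; [apply hyp0|exact Hx].
  - intros H. apply complete in H.
    assert (K : Dx G d).
    { destruct G as [|g gs]; simpl in H.
      - apply bot_none. destruct d; auto.
      - apply bot_none. eapply mp_D. eapply Dx_wk; [exact H|intros ? []].
        apply conj_build. idt. intros; idt. }
    destruct K as [n Hn]. eapply D_SD; eauto. apply incl_refl.
Qed.
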